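(* There is a universal constant $C$ such that the following holds. Let $n,m,n',m',k$ be non-negative integers and $0<\gamma\le\frac12$ with $k\le\gamma n$ and $n'\le\gamma n$. Suppose $|m-\frac n2|\le t\sqrt n$ and $|m'-\frac{n'}{2}|\le t\sqrt{n'}$ for some $t\le\frac{1}{100\sqrt\gamma}$. Then $$\mathrm{d_{TV}}(\mathcal{H}_{n,m,k},\mathcal{H}_{n-n',m-m',k})\le C(1+t)\gamma.$$
   Context: $\mathcal{H}_{N,M,k}$ is the hypergeometric distribution: the number of red balls obtained when drawing $k$ balls without replacement from $N$ balls of which $M$ are red. $\mathrm{d_{TV}}$ denotes total variation distance. *)

(* Defs.v *)
From HB Require Import structures.
From mathcomp Require Import all_boot all_order all_algebra.
From mathcomp Require Import reals.
Set Implicit Arguments. Unset Strict Implicit. Unset Printing Implicit Defensive.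
Import Order.TTheory GRing.Theory Num.Theory.
Local Open Scope ring_scope.

(* Support is contained in {0,...,k}, so we index j by 'I_k.+1.
   Meaningful when M <= N and k <= N (assumed in the statement). *)
Definition hyp_pmf (R : realType) (N M k : nat) (j : 'I_k.+1) : R :=
  ('C(M, j) * 'C(N - M, k - j))%:R / ('C(N, k))%:R.

Definition dTV (R : realType) (T : finType) (p q : T -> R) : R :=
  2^-1 * \sum_(x : T) `|p x - q x|.

(* Main.v *)
Require Import Defs.
From HB Require Import structures.
From mathcomp Require Import all_boot all_order all_algebra.
From mathcomp Require Import reals.
From mathcomp Require Import ring lra zify.
Import Order.TTheory GRing.Theory Num.Theory.
Local Open Scope ring_scope.


Definition hh (RT : realType) (k R B : nat) (j : 'I_k.+1) : RT :=
  @hyp_pmf RT (R + B) R k j.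

Lemma hhE (RT : realType) k R B j :
  hh RT k R B j = ('C(R, j) * 'C(B, k - j))%:R / ('C(R + B, k))%:R.
Proof. by rewrite /hh /hyp_pmf addKn. Qed.

Lemma hh_ge0 (RT : realType) k R B j : 0 <= hh RT k R B j.
Proof. by rewrite hhE divr_ge0. Qed.

Lemma hh_sum (RT : realType) k R B : (k <= R + B)%N -> \sum_j hh RT k R B j = 1.
Proof.
move=> hk.
under eq_bigr => j _ do rewrite hhE.
rewrite -mulr_suml -natr_sum binomial.Vandermonde mulfV // pnatr_eq0 -lt0n bin_gt0 //.
Qed.

Lemma binR (RT : realType) (n a : nat) :
  ('C(n.-1, a) * n)%:R = ('C(n, a))%:R * (n%:R - a%:R) :> RT.
Proof.
rewrite mulnC mul_bin_down.
case: (leqP a n) => h; first by rewrite natrM natrB // mulrC.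
by rewrite (bin_small h) muln0 mul0r.
Qed.

Lemma hh_sym (RT : realType) k R B j : hh RT k R B j = hh RT k B R (rev_ord j).
Proof.
rewrite !hhE /= addnC mulnC subKn //; by have := ltn_ord j; rewrite ltnS.
Qed.


Lemma red_id (RT : realType) k R B (j : 'I_k.+1) : (k <= R + B)%N ->
  hh RT k R B j * (R.+1%:R * ((R.+1 + B)%:R - k%:R)) =
  hh RT k R.+1 B j * ((R.+1%:R - (j:nat)%:R) * (R.+1 + B)%:R).
Proof.
move=> hk; rewrite !hhE.
have F1 := binR RT R.+1 j; have F2 := binR RT (R.+1 + B) k.
rewrite addSn /= in F2; rewrite /= in F1.
rewrite !natrM in F1 F2 *.
have R1n0 : (R.+1%:R : RT) != 0 by rewrite pnatr_eq0.
have Nn0 : ((R + B).+1%:R : RT) != 0 by rewrite pnatr_eq0.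
have Nk0 : ((R + B).+1%:R - k%:R : RT) != 0.
  rewrite -natrB; last by lia.
  rewrite pnatr_eq0; apply/eqP; lia.
set a := 'C(R, j)%:R in F1 *; set a1 := 'C(R.+1, j)%:R in F1 *.
set c := 'C(R + B, k)%:R in F2 *; set c1 := 'C((R + B).+1, k)%:R in F2 *.
have c1n0 : c1 != 0 by rewrite pnatr_eq0 -lt0n bin_gt0; lia.
have -> : a = a1 * (R.+1%:R - (j:nat)%:R) / R.+1%:R by rewrite -F1 mulfK.
have -> : c = c1 * ((R + B).+1%:R - k%:R) / (R + B).+1%:R by rewrite -F2 mulfK.
rewrite addSn.
field; by rewrite -natrD !nat1r c1n0 Nn0 R1n0 Nk0.
Qed.

Lemma pair_id (RT : realType) k R B (j : 'I_k.+1) : (k <= R + B)%N ->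
  hh RT k R B j * (R.+1%:R * B.+1%:R * (((R + B).+2)%:R - k%:R) * (((R + B).+1)%:R - k%:R)) =
  hh RT k R.+1 B.+1 j * ((R.+1%:R - (j:nat)%:R) * (B.+1%:R - (k - j)%:R) * (R + B).+2%:R * (R + B).+1%:R).
Proof.
move=> hk; rewrite !hhE addSn addnS.
have F1 := binR RT R.+1 j; have F3 := binR RT B.+1 (k - j).
have F2 := binR RT (R + B).+1 k; have F4 := binR RT (R + B).+2 k.
rewrite /= in F1 F2 F3 F4.
rewrite !natrM in F1 F2 F3 F4 *.
have R1n0 : (R.+1%:R : RT) != 0 by rewrite pnatr_eq0.
have B1n0 : (B.+1%:R : RT) != 0 by rewrite pnatr_eq0.
have Nn0 : ((R + B).+1%:R : RT) != 0 by rewrite pnatr_eq0.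
have N2n0 : ((R + B).+2%:R : RT) != 0 by rewrite pnatr_eq0.
have Nk0 : ((R + B).+1%:R - k%:R : RT) != 0.
  rewrite -natrB; last by lia.
  rewrite pnatr_eq0; apply/eqP; lia.
have N2k0 : ((R + B).+2%:R - k%:R : RT) != 0.
  rewrite -natrB; last by lia.
  rewrite pnatr_eq0; apply/eqP; lia.
set a := 'C(R, j)%:R in F1 *; set a1 := 'C(R.+1, j)%:R in F1 *.
set b := 'C(B, k - j)%:R in F3 *; set b1 := 'C(B.+1, k - j)%:R in F3 *.
set c := 'C(R + B, k)%:R in F2 *; set c' := 'C((R + B).+1, k)%:R in F2 F4 *.
set c1 := 'C((R + B).+2, k)%:R in F4 *.
have c1n0 : c1 != 0 by rewrite pnatr_eq0 -lt0n bin_gt0; lia.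
have -> : a = a1 * (R.+1%:R - (j:nat)%:R) / R.+1%:R by rewrite -F1 mulfK.
have -> : b = b1 * (B.+1%:R - (k - j)%:R) / B.+1%:R by rewrite -F3 mulfK.
have -> : c = c' * ((R + B).+1%:R - k%:R) / (R + B).+1%:R by rewrite -F2 mulfK.
have -> : c' = c1 * ((R + B).+2%:R - k%:R) / (R + B).+2%:R by rewrite -F4 mulfK.
have e2 : (2 + (R%:R + B%:R) : RT) = (R + B).+2%:R.
  by rewrite -natrD !mulrSr; ring.
field; by rewrite e2 -natrD !nat1r c1n0 Nn0 N2n0 R1n0 B1n0 Nk0 N2k0.
Qed.

Lemma sum_quad (RT : realType) (I : finType) (w x : I -> RT) a b d :
  \sum_i w i * (a + b * x i + d * x i ^+ 2) =
  a * (\sum_i w i) + b * (\sum_i w i * x i) + d * (\sum_i w i * x i ^+ 2).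
Proof. rewrite !mulr_sumr -!big_split; apply: eq_bigr => i _ /=; ring. Qed.

Lemma moments (RT : realType) k R B : (k <= R + B)%N ->
  let r : RT := R.+1%:R in let b : RT := B.+1%:R in let K : RT := k%:R in
  let N := r + b in let c := r * K / N in
  \sum_j hh RT k R.+1 B.+1 j * ((j:nat)%:R - c) = 0 /\
  \sum_j hh RT k R.+1 B.+1 j * ((j:nat)%:R - c) ^+ 2 =
     K * r * b * (N - K) / (N ^+ 2 * (N - 1)).
Proof.
move=> hk r b K N c.
have S0 : \sum_j hh RT k R.+1 B.+1 j = 1 by apply: hh_sum; lia.
set S1 := \sum_j hh RT k R.+1 B.+1 j * (j:nat)%:R.
set S2 := \sum_j hh RT k R.+1 B.+1 j * (j:nat)%:R ^+ 2.
have eN : (R.+1 + B.+1)%:R = N by rewrite natrD.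
have eN2 : (R + B).+2%:R = N by rewrite -eN addSn addnS.
have eN1 : (R + B).+1%:R = N - 1 by rewrite -eN2 [in RHS]mulrSr addrK.
have Nn0 : N != 0 by rewrite -eN pnatr_eq0.
have N1n0 : N - 1 != 0 by rewrite -eN1 pnatr_eq0.
have hk1 : (k <= R + B.+1)%N by lia.
have E1 : \sum_j hh RT k R B.+1 j * (r * (N - K)) =
   \sum_j hh RT k R.+1 B.+1 j * (r * N + (- N) * (j:nat)%:R + 0 * (j:nat)%:R ^+ 2).
  apply: eq_bigr => j _; have H := red_id RT k R B.+1 j hk1.
  rewrite eN -/r -/K in H; rewrite H; ring.
rewrite sum_quad -/S1 -/S2 S0 -mulr_suml hh_sum // mul1r in E1.
have eS1 : S1 = c by rewrite /c; apply: (mulfI Nn0); rewrite mulrCA mulfV //; lra.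
set X := r * b * (N - K) * (N - 1 - K).
have E2 : \sum_j hh RT k R B j * X =
   \sum_j hh RT k R.+1 B.+1 j * (r * (b - K) * (N * (N - 1)) + ((r - b + K) * (N * (N - 1))) * (j:nat)%:R + (- (N * (N - 1))) * (j:nat)%:R ^+ 2).
  apply: eq_bigr => j _; have H := pair_id RT k R B j hk.
  rewrite eN2 eN1 natrB -/r -/K -/b in H; last by rewrite -ltnS.
  rewrite /X H; ring.
rewrite sum_quad -/S1 -/S2 S0 -mulr_suml hh_sum // mul1r eS1 in E2.
have eS2 : S2 = (r * (b - K) * (N * (N - 1)) + ((r - b + K) * (N * (N - 1))) * c - X) / (N * (N - 1)).
  rewrite E2; field; by rewrite Nn0 N1n0.
split.
  have -> : \sum_j hh RT k R.+1 B.+1 j * ((j:nat)%:R - c) =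
     \sum_j hh RT k R.+1 B.+1 j * (- c + 1 * (j:nat)%:R + 0 * (j:nat)%:R ^+ 2).
    by apply: eq_bigr => j _; congr (_ * _); ring.
  by rewrite sum_quad -/S1 -/S2 S0 eS1; ring.
have -> : \sum_j hh RT k R.+1 B.+1 j * ((j:nat)%:R - c) ^+ 2 =
   \sum_j hh RT k R.+1 B.+1 j * (c ^+ 2 + (- (2 * c)) * (j:nat)%:R + 1 * (j:nat)%:R ^+ 2).
  by apply: eq_bigr => j _; congr (_ * _); ring.
rewrite sum_quad -/S1 -/S2 S0 eS1 eS2 /X /c /N.
field.
by rewrite !nat1r -/r -/b -/N N1n0 Nn0.
Qed.

Definition dist (RT : realType) k R B R' B' : RT :=
  \sum_j `|hh RT k R B j - hh RT k R' B' j|.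

Lemma abs_moment (RT : realType) (I : finType) (w x : I -> RT) (c K : RT) :
  (forall i, 0 <= w i) -> \sum_i w i = 1 -> 0 < K ->
  \sum_i w i * (x i - c) ^+ 2 <= K ->
  \sum_i w i * `|x i - c| <= Num.sqrt K.
Proof.
move=> w0 w1 K0 hV.
set s := Num.sqrt K.
have s0 : 0 < s by rewrite sqrtr_gt0.
have ss : s ^+ 2 = K by rewrite sqr_sqrtr // ltW.
have H : forall i, w i * `|x i - c| <= w i * ((x i - c) ^+ 2 + s ^+ 2) / (2 * s).
  move=> i; rewrite -mulrA ler_wpM2l // ler_pdivlMr ?mulr_gt0 //.
  have h1 := sqr_ge0 (`|x i - c| - s).
  have h2 : `|x i - c| ^+ 2 = (x i - c) ^+ 2 by rewrite real_normK // num_real.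
  nra.
apply: le_trans (ler_sum _ (fun i _ => H i)) _.
rewrite -mulr_suml.
have -> : \sum_i w i * ((x i - c) ^+ 2 + s ^+ 2) = \sum_i w i * (x i - c) ^+ 2 + s ^+ 2 * \sum_i w i.
  by rewrite mulr_sumr -big_split; apply: eq_bigr => i _ /=; ring.
rewrite w1 mulr1 ler_pdivrMr ?mulr_gt0 //; nra.
Qed.

Lemma var_le (RT : realType) k R B : (k <= R + B)%N -> (1 <= k)%N ->
  let r : RT := R.+1%:R in let b : RT := B.+1%:R in let K : RT := k%:R in
  let N := r + b in let c := r * K / N in
  (\sum_j hh RT k R.+1 B.+1 j * ((j:nat)%:R - c) ^+ 2 <= K : Prop).
Proof.
move=> hk k1 r b K N c; have [_ ->] := moments RT k R B hk.
have eNrb : N = r + b by [].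
have r0 : 0 < r by rewrite ltr0Sn.
have b0 : 0 < b by rewrite ltr0Sn.
have K1 : 1 <= K by rewrite ler1n.
have NK : K <= N - 2.
  have -> : N = (R + B).+2%:R by rewrite /N /r /b -natrD addSn addnS.
  rewrite -[2]/(2%:R) -natrB // ler_nat; lia.
rewrite ler_pdivrMr; last by apply: mulr_gt0; nra.
have h1 : r * b <= N ^+ 2 by rewrite /N; nra.
have h2 : 0 <= N - K by lra.
have h3 : K * r * b * (N - K) = K * ((r * b) * (N - K)) by ring.
rewrite h3; apply: ler_wpM2l; first lra.
apply: ler_pM => //; try nra; lra.
Qed.

Lemma red_cost (RT : realType) k R B : (k <= R + B)%N -> (1 <= k)%N ->
  let r : RT := R.+1%:R in let b : RT := B.+1%:R in let K : RT := k%:R in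
  let N := r + b in
  (dist RT k R.+1 B.+1 R B.+1 <= N / (r * (N - K)) * Num.sqrt K : Prop).
Proof.
move=> hk k1 r b K N.
set c := r * K / N.
have eNrb : N = r + b by [].
have r0 : 0 < r by rewrite ltr0Sn.
have b0 : 0 < b by rewrite ltr0Sn.
have K1 : 1 <= K by rewrite ler1n.
have eN : (R.+1 + B.+1)%:R = N by rewrite natrD.
have NK : K <= N - 2.
  rewrite -eN -[2]/(2%:R) -natrB; last by lia.
  rewrite ler_nat; lia.
have Nn0 : N != 0 by apply/eqP; lra.
have NKn0 : N - K != 0 by apply/eqP; lra.
have rn0 : r != 0 by apply/eqP; lra.
have hk1 : (k <= R + B.+1)%N by lia.
have F0 : 0 <= N / (r * (N - K)) by apply: divr_ge0; [lra | apply: mulr_ge0; lra].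
have P : forall j : 'I_k.+1, `|hh RT k R.+1 B.+1 j - hh RT k R B.+1 j| =
    N / (r * (N - K)) * (hh RT k R.+1 B.+1 j * `|(j:nat)%:R - c|).
  move=> j; have H := red_id RT k R B.+1 j hk1; rewrite eN -/r -/K in H.
  have -> : hh RT k R B.+1 j = hh RT k R.+1 B.+1 j * ((r - (j:nat)%:R) * N) / (r * (N - K)).
    by rewrite -H mulfK // mulf_neq0.
  have -> : hh RT k R.+1 B.+1 j - hh RT k R.+1 B.+1 j * ((r - (j:nat)%:R) * N) / (r * (N - K))
     = N / (r * (N - K)) * hh RT k R.+1 B.+1 j * ((j:nat)%:R - c).
    by rewrite /c; field; rewrite !nat1r -/r -/K Nn0 NKn0 rn0.
  by rewrite -mulrA normrM (ger0_norm F0) normrM (ger0_norm (hh_ge0 _ _ _ _ _)).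
rewrite /dist (eq_bigr _ (fun j _ => P j)) -mulr_sumr ler_wpM2l //.
apply: abs_moment => //; first by move=> i; apply: hh_ge0.
  by apply: hh_sum; lia.
  lra.
exact: var_le.
Qed.

Lemma pair_cost (RT : realType) k R B : (k <= R + B)%N -> (1 <= k)%N ->
  let r : RT := R.+1%:R in let b : RT := B.+1%:R in let K : RT := k%:R in
  let N := r + b in
  (dist RT k R.+1 B.+1 R B <=
    (r * b * (N - K) * K / N + `|r - b| * (N - K) * (N - 1) * Num.sqrt K + N * (N - 1) * K)
     / (r * b * (N - K) * (N - 1 - K)) : Prop).
Proof.
move=> hk k1 r b K N.
set c := r * K / N.
have eNrb : N = r + b by [].
have r0 : 0 < r by rewrite ltr0Sn.
have b0 : 0 < b by rewrite ltr0Sn.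
have K1 : 1 <= K by rewrite ler1n.
have eN : (R.+1 + B.+1)%:R = N by rewrite natrD.
have eN2 : (R + B).+2%:R = N by rewrite -eN addSn addnS.
have eN1 : (R + B).+1%:R = N - 1 by rewrite -eN2 [in RHS]mulrSr addrK.
have NK : K <= N - 2.
  rewrite -eN2 -[2]/(2%:R) -natrB; last by lia.
  rewrite ler_nat; lia.
have Nn0 : N != 0 by apply/eqP; lra.
have N1n0 : N - 1 != 0 by apply/eqP; lra.
have NKn0 : N - K != 0 by apply/eqP; lra.
have NK1n0 : N - 1 - K != 0 by apply/eqP; lra.
have rn0 : r != 0 by apply/eqP; lra.
have bn0 : b != 0 by apply/eqP; lra.
set D := r * b * (N - K) * (N - 1 - K).
have D0 : 0 < D by rewrite /D; apply: mulr_gt0; [apply: mulr_gt0; [nra|lra]|lra].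
set T1 := r * b * (N - K) * K / N.
set L := (r - b) * (N - K) * (N - 1).
set Q := N * (N - 1).
have T10 : 0 <= T1 by rewrite /T1; apply: divr_ge0; [apply: mulr_ge0; [apply: mulr_ge0; [nra|lra]|lra]|lra].
have Q0 : 0 <= Q by rewrite /Q; nra.
have P : forall j : 'I_k.+1, `|hh RT k R.+1 B.+1 j - hh RT k R B j| <=
    (T1 * hh RT k R.+1 B.+1 j + `|L| * (hh RT k R.+1 B.+1 j * `|(j:nat)%:R - c|)
      + Q * (hh RT k R.+1 B.+1 j * ((j:nat)%:R - c) ^+ 2)) / D.
  move=> j; have H := pair_id RT k R B j hk.
  rewrite eN2 eN1 natrB -/r -/K -/b in H; last by rewrite -ltnS.
  have -> : hh RT k R B j = hh RT k R.+1 B.+1 j * ((r - (j:nat)%:R) * (b - (K - (j:nat)%:R)) * N * (N - 1)) / D.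
    by rewrite -H mulfK // gt_eqF.
  set h := hh RT k R.+1 B.+1 j; set u := (j:nat)%:R - c.
  have -> : h - h * ((r - (j:nat)%:R) * (b - (K - (j:nat)%:R)) * N * (N - 1)) / D
     = - (h * (T1 + L * u - Q * u ^+ 2) / D).
    rewrite /u /T1 /L /Q /D /c /N; field.
    by rewrite !nat1r -/r -/b -/N Nn0 NKn0 rn0 bn0 NK1n0.
  have h0 : 0 <= h by apply: hh_ge0.
  have iD : 0 < D^-1 by rewrite invr_gt0.
  rewrite normrN normrM (gtr0_norm iD); apply: ler_wpM2r; first exact: ltW iD.
  rewrite normrM (ger0_norm h0).
  have e1 : `|T1 + L * u - Q * u ^+ 2| <= T1 + `|L| * `|u| + Q * u ^+ 2.
    apply: le_trans (ler_normB _ _) _; rewrite (ger0_norm (mulr_ge0 Q0 (sqr_ge0 _))).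
    apply: lerD => //; apply: le_trans (ler_normD _ _) _.
    by rewrite (ger0_norm T10) normrM.
  have -> : T1 * h + `|L| * (h * `|u|) + Q * (h * u ^+ 2) = h * (T1 + `|L| * `|u| + Q * u ^+ 2) by ring.
  exact: (ler_wpM2l h0 e1).
apply: le_trans (ler_sum _ (fun j _ => P j)) _.
rewrite -mulr_suml big_split big_split /= -!mulr_sumr.
apply: ler_wpM2r; first by rewrite invr_ge0 ltW.
have hk2 : (k <= R.+1 + B.+1)%N by lia.
rewrite hh_sum //.
have A := abs_moment RT _ (fun j => hh RT k R.+1 B.+1 j) (fun j => (j:nat)%:R) c K
   (fun i => hh_ge0 _ _ _ _ _) (hh_sum RT k R.+1 B.+1 hk2)
   (lt_le_trans ltr01 K1) (var_le RT k R B hk k1).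
have V := var_le RT k R B hk k1.
have eL : `|L| = `|r - b| * (N - K) * (N - 1).
  by rewrite /L !normrM (ger0_norm (ltW (_ : 0 < N - K))) ?(ger0_norm (ltW (_ : 0 < N - 1))) //; lra.
rewrite mulr1 eL; apply: lerD; first apply: lerD => //.
  by apply: ler_wpM2l => //; apply: mulr_ge0; [apply: mulr_ge0|]; [apply: normr_ge0|lra|lra].
by apply: ler_wpM2l.
Qed.


Lemma red_num (RT : realType) (r b K n : RT) :
  9 * n <= 20 * r -> 9 * n <= 20 * b -> 1 <= K -> 100 * K <= n ->
  (r + b) / (r * (r + b - K)) <= 5 / n.
Proof.
move=> hr hb hK hn.
have n0 : 0 < n by lra.
have r0 : 0 < r by lra.
have NK : 0 < r + b - K by lra.
rewrite ler_pdivrMr ?mulr_gt0 // mulrAC ler_pdivlMr //.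
nra.
Qed.

Lemma pair_num (RT : realType) (r b K n s : RT) :
  9 * n <= 20 * r -> 9 * n <= 20 * b -> 1 <= K -> 100 * K <= n -> 0 <= s ->
  let N := r + b in
  ((r * b * (N - K) * K / N + `|r - b| * (N - K) * (N - 1) * s + N * (N - 1) * K)
     / (r * b * (N - K) * (N - 1 - K)) <= (23 * K + 10 * `|r - b| * s) / n ^+ 2 : Prop).
Proof.
move=> hr hb hK hn hs N.
have eN : N = r + b by [].
have n0 : 0 < n by lra.
have r0 : 0 < r by lra.
have b0 : 0 < b by lra.
have NK : 0 < N - K by lra.
have NK1 : 0 < N - 1 - K by lra.
have N0 : 0 < N by lra.
have N1 : 0 < N - 1 by lra.
have rb : 0 < r * b by nra.
have D0 : 0 < r * b * (N - K) * (N - 1 - K) by apply: mulr_gt0; [apply: mulr_gt0|].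
have n2 : 0 < n ^+ 2 by apply: exprn_gt0.
have -> : (23 * K + 10 * `|r - b| * s) / n ^+ 2 =
   3 * K / n ^+ 2 + 10 * `|r - b| * s / n ^+ 2 + 20 * K / n ^+ 2.
  by rewrite !mulrDl; ring.
rewrite mulrDl mulrDl.
apply: lerD; first apply: lerD.
- have -> : r * b * (N - K) * K / N / (r * b * (N - K) * (N - 1 - K)) = K / (N * (N - 1 - K)).
    by field; rewrite !gt_eqF.
  rewrite ler_pdivrMr ?mulr_gt0 // mulrAC ler_pdivlMr //.
  have h : n ^+ 2 <= 3 * (N * (N - 1 - K)) by nra.
  nra.
- have -> : `|r - b| * (N - K) * (N - 1) * s / (r * b * (N - K) * (N - 1 - K)) =
     `|r - b| * s * ((N - 1) / (r * b * (N - 1 - K))).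
    by field; rewrite !gt_eqF.
  have -> : 10 * `|r - b| * s / n ^+ 2 = `|r - b| * s * (10 / n ^+ 2) by ring.
  apply: ler_wpM2l; first by apply: mulr_ge0.
  rewrite ler_pdivrMr ?mulr_gt0 // mulrAC ler_pdivlMr //.
  have h1 : n ^+ 2 <= 5 * (r * b) by nra.
  have h2 : N - 1 <= 2 * (N - 1 - K) by lra.
  nra.
- have -> : N * (N - 1) * K / (r * b * (N - K) * (N - 1 - K)) =
     K * (N * (N - 1) / (r * b * ((N - K) * (N - 1 - K)))).
    by field; rewrite !gt_eqF.
  have -> : 20 * K / n ^+ 2 = K * (20 / n ^+ 2) by ring.
  apply: ler_wpM2l; first lra.
  rewrite ler_pdivrMr ?mulr_gt0 // mulrAC ler_pdivlMr //.
  have h1 : n ^+ 2 <= 5 * (r * b) by nra.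
  have h2 : N * (N - 1) <= 4 * ((N - K) * (N - 1 - K)) by nra.
  have h3 := ler_pM (ltW (mulr_gt0 N0 N1)) (ltW n2) h2 h1.
  nra.
Qed.

Lemma dist_tri (RT : realType) k R1 B1 R2 B2 R3 B3 :
  dist RT k R1 B1 R3 B3 <= dist RT k R1 B1 R2 B2 + dist RT k R2 B2 R3 B3.
Proof.
rewrite /dist -big_split /=; apply: ler_sum => j _.
apply: le_trans (ler_normD _ _); rewrite addrA subrK //.
Qed.

Lemma dist_sym (RT : realType) k R1 B1 R2 B2 :
  dist RT k R1 B1 R2 B2 = dist RT k R2 B2 R1 B1.
Proof. by rewrite /dist; apply: eq_bigr => j _; rewrite distrC. Qed.

Lemma dist_swap (RT : realType) k R1 B1 R2 B2 :
  dist RT k R1 B1 R2 B2 = dist RT k B1 R1 B2 R2.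
Proof.
rewrite /dist (reindex_inj rev_ord_inj) /=.
by apply: eq_bigr => j _; rewrite !(hh_sym RT k _ _ (rev_ord j)) rev_ordK.
Qed.

Lemma dist0 (RT : realType) k R B : dist RT k R B R B = 0.
Proof. by rewrite /dist big1 // => j _; rewrite subrr normr0. Qed.

Lemma natle (RT : realType) (a b c d : nat) :
  (a * b <= c * d)%N -> (a%:R * b%:R <= c%:R * d%:R :> RT).
Proof. by rewrite -!natrM ler_nat. Qed.
Arguments natle RT {a b c d}.

Lemma red_step (RT : realType) k n R B :
  (0 < k)%N -> (100 * k <= n)%N -> (9 * n <= 20 * R)%N -> (9 * n <= 20 * B)%N ->
  dist RT k R.+1 B R B <= 5 * Num.sqrt (k%:R) / n%:R.
Proof.
move=> k1 kn hR hB.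
case: B hB => [|B] hB; first lia.
have hk : (k <= R + B)%N by lia.
apply: le_trans (red_cost RT k R B hk k1) _.
have h1 : (9 * n <= 20 * R.+1)%N by lia.
have h2 : (9 * n <= 20 * B.+1)%N by lia.
have h4 : (100 * k <= n * 1)%N by lia.
have h3 : (1 <= k%:R :> RT) by rewrite ler1n.
have := red_num RT (R.+1%:R) (B.+1%:R) (k%:R) (n%:R) (natle RT h1) (natle RT h2) h3.
have h5 := natle RT h4; rewrite mulr1 in h5.
move/(_ h5) => H.
rewrite [5 * _ / _]mulrAC; apply: ler_wpM2r => //; exact: sqrtr_ge0.
Qed.

Lemma pair_step (RT : realType) k n R B :
  (0 < k)%N -> (100 * k <= n)%N -> (9 * n <= 20 * R)%N -> (9 * n <= 20 * B)%N ->
  dist RT k R.+1 B.+1 R B <=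
    (23 * k%:R + 10 * `|R%:R - B%:R| * Num.sqrt (k%:R)) / n%:R ^+ 2.
Proof.
move=> k1 kn hR hB.
have hk : (k <= R + B)%N by lia.
apply: le_trans (pair_cost RT k R B hk k1) _.
have h1 : (9 * n <= 20 * R.+1)%N by lia.
have h2 : (9 * n <= 20 * B.+1)%N by lia.
have h4 : (100 * k <= n * 1)%N by lia.
have h3 : (1 <= k%:R :> RT) by rewrite ler1n.
have h5 := natle RT h4; rewrite mulr1 in h5.
have e : (R.+1%:R - B.+1%:R : RT) = R%:R - B%:R by rewrite -!nat1r; ring.
have := @pair_num RT _ _ _ _ _ (natle RT h1) (natle RT h2) h3 h5 (sqrtr_ge0 (k%:R)).
by rewrite e.
Qed.

Lemma red_iter (RT : realType) k n R B i :
  (0 < k)%N -> (100 * k <= n)%N -> (9 * n <= 20 * R)%N -> (9 * n <= 20 * B)%N ->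
  dist RT k (R + i) B R B <= i%:R * (5 * Num.sqrt (k%:R) / n%:R).
Proof.
move=> k1 kn hR hB; elim: i => [|i IH]; first by rewrite addn0 dist0 mul0r.
apply: le_trans (dist_tri RT k _ _ (R + i) B _ _) _.
rewrite addnS -nat1r mulrDl mul1r; apply: lerD => //.
apply: red_step => //; lia.
Qed.

Lemma blue_iter (RT : realType) k n R B i :
  (0 < k)%N -> (100 * k <= n)%N -> (9 * n <= 20 * R)%N -> (9 * n <= 20 * B)%N ->
  dist RT k R (B + i) R B <= i%:R * (5 * Num.sqrt (k%:R) / n%:R).
Proof. by move=> *; rewrite dist_swap; apply: red_iter. Qed.

Lemma pair_iter (RT : realType) k n R B i :
  (0 < k)%N -> (100 * k <= n)%N -> (9 * n <= 20 * R)%N -> (9 * n <= 20 * B)%N ->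
  dist RT k (R + i) (B + i) R B <=
    i%:R * ((23 * k%:R + 10 * `|R%:R - B%:R| * Num.sqrt (k%:R)) / n%:R ^+ 2).
Proof.
move=> k1 kn hR hB; elim: i => [|i IH]; first by rewrite !addn0 dist0 mul0r.
apply: le_trans (dist_tri RT k _ _ (R + i) (B + i) _ _) _.
rewrite !addnS -nat1r mulrDl mul1r; apply: lerD => //.
have e : ((R + i)%:R - (B + i)%:R : RT) = R%:R - B%:R by rewrite !natrD; ring.
rewrite -e; apply: pair_step => //; lia.
Qed.


Lemma final_arith (RT : realType) (g t N Np K P S sk sn snp a : RT) :
  0 < N -> 0 <= P -> P <= Np -> Np <= g * N -> 0 <= K -> K <= g * N ->
  0 <= a -> a <= 2 * t * sn -> 0 <= S -> S <= 2 * t * snp -> 0 <= t -> 0 < g -> g <= 1 ->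
  0 <= sk -> 0 <= sn -> 0 <= snp -> sk * sn <= N -> snp * sk <= g * N ->
  2^-1 * (P * ((23 * K + 10 * a * sk) / N ^+ 2) + S * (5 * sk / N)) <= 100 * (1 + t) * g.
Proof.
move=> N0 P0 PN NpN K0 KN a0 aT S0 ST t0 g0 g1 sk0 sn0 snp0 sksn snpsk.
have X0 : 0 <= 23 * K + 10 * a * sk by nra.
have XB : 23 * K + 10 * a * sk <= (23 * g + 20 * t) * N.
  have : a * sk <= 2 * t * (sk * sn) by nra.
  nra.
have h1 : P * ((23 * K + 10 * a * sk) / N ^+ 2) <= g * (23 * g + 20 * t).
  rewrite mulrA ler_pdivrMr ?exprn_gt0 //.
  have := ler_pM P0 X0 (le_trans PN NpN) XB.
  nra.
have h2 : S * (5 * sk / N) <= 10 * t * g.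
  rewrite mulrA ler_pdivrMr //.
  have := ler_wpM2r sk0 ST.
  nra.
nra.
Qed.

Lemma dist_le2 (RT : realType) k R B R' B' :
  (k <= R + B)%N -> (k <= R' + B')%N -> dist RT k R B R' B' <= 2.
Proof.
move=> h1 h2; rewrite /dist.
apply: le_trans (_ : \sum_j (hh RT k R B j + hh RT k R' B' j) <= 2).
  apply: ler_sum => j _; apply: le_trans (ler_normB _ _) _.
  by rewrite !ger0_norm ?hh_ge0.
by rewrite big_split /= !hh_sum.
Qed.

Lemma dist_k0 (RT : realType) R B R' B' : dist RT 0 R B R' B' = 0.
Proof.
rewrite /dist big1 // => j _; rewrite !hhE.
have -> : (j : nat) = 0%N by case: j => [[|]].
by rewrite !bin0 subrr normr0.
Qed.

Lemma natle' (RT : realType) (a b c d : nat) :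
  (a%:R * b%:R <= c%:R * d%:R :> RT) -> (a * b <= c * d)%N.
Proof. by rewrite -!natrM ler_nat. Qed.


Lemma path_bound (RT : realType) n m n' m' k :
  (0 < k)%N -> (100 * k <= n)%N -> (m <= n)%N -> (m' <= m)%N -> (n' <= n)%N ->
  (m - m' <= n - n')%N ->
  (9 * n <= 20 * (m - m'))%N -> (9 * n <= 20 * (n - m))%N ->
  (9 * n <= 20 * ((n - n') - (m - m')))%N ->
  exists P S : nat, (P <= n')%N /\
    S = (if (2 * m' <= n')%N then (n' - 2 * m')%N else (2 * m' - n')%N) /\
    dist RT k m (n - m) (m - m') ((n - n') - (m - m')) <=
      P%:R * ((23 * k%:R + 10 * `|m%:R - (n - m)%:R| * Num.sqrt (k%:R)) / n%:R ^+ 2)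
      + S%:R * (5 * Num.sqrt (k%:R) / n%:R).
Proof.
move=> k1 kn hmn hm'm hn'n hmm' G1 G2 G3.
set Rf := (m - m')%N; set Bf := ((n - n') - (m - m'))%N.
case: ifP => hc.
- (* pairs m', then blue n' - 2m' *)
  exists m', (n' - 2 * m')%N; split; first lia; split => //.
  set Bm := (Bf + (n' - 2 * m'))%N.
  have e1 : (Rf + m')%N = m by rewrite /Rf; lia.
  have e2 : (Bm + m')%N = (n - m)%N by rewrite /Bm /Bf; lia.
  have x1 : (m%:R : RT) = Rf%:R + m'%:R by rewrite -natrD e1.
  have x2 : ((n - m)%:R : RT) = Bm%:R + m'%:R by rewrite -natrD e2.
  have GB : (9 * n <= 20 * Bm)%N by rewrite /Bm; lia.
  rewrite -{1}e1 -{1}e2.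
  apply: le_trans (dist_tri RT k _ _ Rf Bm _ _) _.
  apply: lerD.
    have eA : (Rf%:R - Bm%:R : RT) = m%:R - (n - m)%:R by rewrite x1 x2; ring.
    by rewrite -eA; apply: pair_iter.
  by apply: blue_iter.
case: (leqP m' n') => hc2.
- (* pairs n' - m', then reds 2m' - n' *)
  exists (n' - m')%N, (2 * m' - n')%N; split; first lia; split => //.
  set r0 := (2 * m' - n')%N; set P := (n' - m')%N.
  have e1 : (Rf + r0 + P)%N = m by rewrite /Rf /r0 /P; lia.
  have e2 : (Bf + P)%N = (n - m)%N by rewrite /Bf /P; lia.
  have x1 : (m%:R : RT) = (Rf + r0)%:R + P%:R by rewrite -natrD e1.
  have x2 : ((n - m)%:R : RT) = Bf%:R + P%:R by rewrite -natrD e2.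
  have GR : (9 * n <= 20 * (Rf + r0))%N by rewrite /Rf; lia.
  rewrite -{1}e1 -{1}e2.
  apply: le_trans (dist_tri RT k _ _ (Rf + r0) Bf _ _) _.
  apply: lerD; last by apply: red_iter.
  have eA : ((Rf + r0)%:R - Bf%:R : RT) = m%:R - (n - m)%:R by rewrite x1 x2; ring.
  by rewrite -eA; apply: pair_iter.
- (* reds m', then add blue m' - n' *)
  exists 0%N, (2 * m' - n')%N; split => //; split => //.
  set e := (m' - n')%N.
  have e1 : (Rf + m')%N = m by rewrite /Rf; lia.
  have e3 : (Bf = (n - m) + e)%N by rewrite /Bf /e; lia.
  have eS : (2 * m' - n')%N = (m' + e)%N by rewrite /e; lia.
  rewrite e3 -{1}e1 mul0r add0r eS natrD mulrDl.
  apply: le_trans (dist_tri RT k _ _ Rf (n - m) _ _) _.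
  apply: lerD; first by apply: red_iter.
  by rewrite dist_sym; apply: blue_iter.
Qed.


Theorem lemma10 (R : realType) :
  exists C : R, forall (n m n' m' k : nat) (gamma t : R),
    (m <= n)%N -> (n' <= n)%N -> (m' <= m)%N -> (m - m' <= n - n')%N ->
    0 < gamma -> gamma <= 2^-1 ->
    k%:R <= gamma * n%:R -> n'%:R <= gamma * n%:R ->
    0 <= t -> t <= (100 * Num.sqrt gamma)^-1 ->
    `|m%:R - n%:R / 2| <= t * Num.sqrt n%:R ->
    `|m'%:R - n'%:R / 2| <= t * Num.sqrt n'%:R ->
    dTV (@hyp_pmf R n m k) (@hyp_pmf R (n - n') (m - m') k) <= C * (1 + t) * gamma.
Proof.
exists 100 => n m n' m' k g t hmn hn'n hm'm hmm' g0 g2 hk hn' t0 ht hm hm'.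
have eD : dTV (@hyp_pmf R n m k) (@hyp_pmf R (n - n') (m - m') k) =
    2^-1 * dist R k m (n - m) (m - m') ((n - n') - (m - m')).
  rewrite /dTV /dist; congr (_ * _); apply: eq_bigr => j _.
  by rewrite /hh (subnKC hmn) (subnKC hmm').
rewrite eD {eD}.
have n0 : 0 <= n%:R :> R by [].
have RHS0 : 0 <= 100 * (1 + t) * g by apply: mulr_ge0 => //; [lra|lra].
have kn : (k <= n)%N by rewrite -(ler_nat R); nra.
have kn' : (k <= n - n')%N.
  have : (k + n' <= n)%N by rewrite -(ler_nat R) natrD; nra.
  lia.
case: (lerP g (1/100)) => hg; last first.
  have := dist_le2 R k m (n - m) (m - m') ((n - n') - (m - m')).
  rewrite (subnKC hmn) (subnKC hmm') => /(_ kn kn') H.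
  nra.
case: k hk kn kn' => [|k] hk kn kn'; first by rewrite dist_k0 mulr0.
have k100 : (100 * k.+1 <= n)%N by rewrite -(ler_nat R) natrM; nra.
have K1 : 1 <= k.+1%:R :> R by rewrite ler1n.
pose sg : R := Num.sqrt g; pose sn : R := Num.sqrt n%:R; pose snp : R := Num.sqrt n'%:R.
pose sk : R := Num.sqrt k.+1%:R.
rewrite -/sg in ht; rewrite -/sn in hm; rewrite -/snp in hm'.
have sg2 : sg ^+ 2 = g by rewrite sqr_sqrtr // ltW.
have sn2 : sn ^+ 2 = n%:R by rewrite sqr_sqrtr.
have snp2 : snp ^+ 2 = n'%:R by rewrite sqr_sqrtr.
have sk2 : sk ^+ 2 = k.+1%:R by rewrite sqr_sqrtr.
have sg0 : 0 < sg by rewrite sqrtr_gt0.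
have sn0 : 0 <= sn by apply: sqrtr_ge0.
have snp0 : 0 <= snp by apply: sqrtr_ge0.
have sk0 : 0 <= sk by apply: sqrtr_ge0.
have gn1 : 1 <= g * n%:R by lra.
have sgsn : 1 <= sg * sn.
  have e : (sg * sn) ^+ 2 = g * n%:R by rewrite exprMn sg2 sn2.
  have p0 : 0 <= sg * sn by apply: mulr_ge0; lra.
  rewrite expr2 in e; nra.
have tsg : t * (100 * sg) <= 1.
  have h100 : 0 < 100 * sg by rewrite mulr_gt0.
  by move: ht; rewrite -[(100 * sg)^-1]mul1r ler_pdivlMr.
have tsn : t * sn <= n%:R / 100.
  have h1 : t * sn <= t * sn * (sg * sn).
    by rewrite -{1}[t * sn]mulr1; apply: ler_wpM2l => //; apply: mulr_ge0.
  have h2 : t * sn * (sg * sn) = t * sg * n%:R by rewrite -sn2; ring.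
  have h3 : t * (100 * sg) * n%:R <= n%:R by rewrite -{2}[n%:R]mul1r; apply: ler_wpM2r.
  lra.
have snple : snp <= sg * sn.
  have p1 : 0 <= g * n%:R by apply: mulr_ge0 => //; apply: ltW.
  by rewrite /snp /sg /sn -sqrtrM ?ler_sqrt //; apply: ltW.
have sn1 : 1 <= sn.
  have n1 : 1 <= n%:R :> R by rewrite ler1n (leq_trans _ k100).
  by have := ler_wsqrtr n1; rewrite sqrtr1.
have tsnp : t * snp <= n%:R / 100.
  have h1 : t * snp <= t * (sg * sn) by apply: ler_wpM2l.
  have h3 : t * (100 * sg) * sn <= sn by rewrite -{2}[sn]mul1r; apply: ler_wpM2r.
  have h4 : sn <= n%:R by rewrite -sn2 expr2 -{1}[sn]mul1r; apply: ler_wpM2r.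
  lra.
have sksn : sk * sn <= n%:R.
  have h : sk <= sn by rewrite /sk /sn ler_sqrt // ler_nat.
  by rewrite -sn2 expr2; apply: ler_wpM2r.
have snpsk : snp * sk <= g * n%:R.
  have e : (snp * sk) ^+ 2 = n'%:R * k.+1%:R by rewrite exprMn snp2 sk2.
  have h : n'%:R * k.+1%:R <= (g * n%:R) ^+ 2 by rewrite expr2; apply: ler_pM.
  have p0 : 0 <= snp * sk by apply: mulr_ge0.
  have p1 : 0 <= g * n%:R by lra.
  rewrite -e in h; rewrite -(ler_pXn2r (_ : (0 < 2)%N)) //; by rewrite inE.
have gn : g * n%:R <= n%:R / 100.
  by have := ler_wpM2r n0 hg; lra.
move: hm hm'; rewrite !ler_norml => /andP[hm1 hm2] /andP[hm'1 hm'2].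
have G1 : (9 * n <= 20 * (m - m'))%N.
  by apply: (@natle' R); rewrite natrB //; lra.
have G2 : (9 * n <= 20 * (n - m))%N.
  by apply: (@natle' R); rewrite natrB //; lra.
have G3 : (9 * n <= 20 * ((n - n') - (m - m')))%N.
  by apply: (@natle' R); rewrite !natrB //; lra.
have [P [S [PN [eS Hd]]]] := path_bound R n m n' m' k.+1 (ltn0Sn k) k100 hmn hm'm hn'n hmm' G1 G2 G3.
have ST : S%:R <= 2 * t * snp :> R.
  move: eS; case: ifP => hc ->.
    by rewrite natrB // natrM; lra.
  rewrite natrB ?natrM; first lra.
  by apply: ltnW; rewrite ltnNge hc.
have aB : `|m%:R - (n - m)%:R| <= 2 * t * sn :> R.
  by rewrite natrB // ler_norml; apply/andP; split; lra.
apply: le_trans (ler_wpM2l _ Hd) _; first lra.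
apply: (@final_arith R g t n%:R n'%:R k.+1%:R P%:R S%:R sk sn snp) => //; try lra.
by rewrite ler_nat.
Qed.
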